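(* Let $X$ be a real Hilbert space, let $A\colon X\rightrightarrows X$ with $\operatorname{dom}A\ne\varnothing$, let $\rho\in\,]-1,+\infty[$, set $D=\operatorname{ran}(\mathrm{Id}+A)$, $T=J_A$ (i.e., $A=T^{-1}-\mathrm{Id}$), and $N=2(\rho+1)T-(2\rho+1)\mathrm{Id}$ (i.e., $T=\tfrac{2\rho+1}{2(\rho+1)}\mathrm{Id}+\tfrac{1}{2(\rho+1)}N$). Then: (i) $A$ is $\rho$-comonotone $\iff$ $N$ is nonexpansive. (ii) $A$ is maximally $\rho$-comonotone $\iff$ [$N$ is nonexpansive and $D=X$].
   Context: $J_A=(\mathrm{Id}+A)^{-1}$, defined on $D=\operatorname{ran}(\mathrm{Id}+A)$. An operator $N$ with domain $D$ is nonexpansive if it is single-valued and $\|Nx-Ny\|\le\|x-y\|$ for all $x,y\in D$. For $\rho\in\mathbb R$, $A$ is $\rho$-comonotone if $\langle x-y,u-v\rangle\ge\rho\|u-v\|^2$ for all $(x,u),(y,v)\in\operatorname{gra}A$; maximally $\rho$-comonotone if moreover no $\rho$-comonotone operator has a graph properly containing $\operatorname{gra}A$. *)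

(* Defs.v *)
From HB Require Import structures.
From mathcomp Require Import all_boot all_order all_algebra.
From mathcomp Require Import all_classical all_reals topology normedtype.
Set Implicit Arguments. Unset Strict Implicit. Unset Printing Implicit Defensive.
Import Order.TTheory GRing.Theory Num.Theory.
Import numFieldNormedType.Exports.
Local Open Scope classical_set_scope.
Local Open Scope ring_scope.

(* ip is an inner product on the normed space X inducing its norm.
   A complete normed space with such an ip is a real Hilbert space. *)
Definition is_inner_product (R : realType) (X : normedModType R)
  (ip : X -> X -> R) : Prop :=
  [/\ (forall x y, ip x y = ip y x),
      (forall a x y z, ip (a *: x + y) z = a * ip x z + ip y z)
    & (forall x, ip x x = `|x| ^+ 2)].

Definition dom_op (X : Type) (A : X -> set X) : set X :=
  [set x | exists u, A x u].

Definition resolvent (R : realType) (X : normedModType R) (A : X -> set X)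
  : X -> set X := fun y x => exists u, A x u /\ y = x + u.

(* ran (Id + A) = dom J_A *)
Definition ran_IdA (R : realType) (X : normedModType R) (A : X -> set X)
  : set X := dom_op (resolvent A).

Definition comonotone (R : realType) (X : normedModType R)
  (ip : X -> X -> R) (rho : R) (A : X -> set X) : Prop :=
  forall x u y v, A x u -> A y v -> rho * `|u - v| ^+ 2 <= ip (x - y) (u - v).

Definition max_comonotone (R : realType) (X : normedModType R)
  (ip : X -> X -> R) (rho : R) (A : X -> set X) : Prop :=
  comonotone ip rho A /\
  forall B : X -> set X, comonotone ip rho B ->
    (forall x u, A x u -> B x u) -> forall x u, B x u -> A x u.

Definition nonexpansive_on (R : realType) (X : normedModType R)
  (D : set X) (N : X -> set X) : Prop :=
  [/\ (forall y, D y <-> exists z, N y z),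
      (forall y z1 z2, N y z1 -> N y z2 -> z1 = z2)
    & (forall x y zx zy, N x zx -> N y zy -> `|zx - zy| <= `|x - y|)].

Definition reflected_op (R : realType) (X : normedModType R) (rho : R)
  (A : X -> set X) : X -> set X :=
  fun y z => exists x, resolvent A y x /\
    z = (2 * (rho + 1)) *: x - (2 * rho + 1) *: y.

(* Main.v *)
Require Import Defs.
From HB Require Import structures.
From mathcomp Require Import all_boot all_order all_algebra.
From mathcomp Require Import all_classical all_reals topology normedtype.
Import Order.TTheory GRing.Theory Num.Theory.
Import numFieldNormedType.Exports.
Local Open Scope classical_set_scope.
Local Open Scope ring_scope.
From mathcomp Require Import ring lra.
Set Implicit Arguments. Unset Strict Implicit. Unset Printing Implicit Defensive.
Lemma le_eps (R : realType) (a b : R) : (forall eps, 0 < eps -> a <= b + eps) -> a <= b.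
Proof. move=> H; apply/ler_addgt0Pr => e he; exact: H. Qed.
Section Reals.
Variable R : realType.

Lemma arch (c eps : R) : 0 < eps -> exists N : nat, c / N.+1%:R < eps.
Proof.
move=> he; exists (Num.truncn (c / eps)).
have h := truncnS_gt (c / eps).
set n := (Num.truncn (c / eps)).+1%:R in h *.
have hn : 0 < n by rewrite /n ltr0Sn.
rewrite ltr_pdivrMr // -ltr_pdivrMl //.
by rewrite mulrC.
Qed.

Lemma nS_neq0 (n : nat) : 1 + n%:R != 0 :> R.
Proof. by rewrite paddr_eq0 ?ler01 ?ler0n // oner_eq0. Qed.

Lemma le_lim (v w c : R) : (forall n : nat, v <= w + c / n.+1%:R) -> v <= w.
Proof.
move=> H; apply: le_eps => eps he.
have [N HN] := arch c he.
apply: (le_trans (H N)); apply: lerD => //; exact: ltW.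
Qed.

Lemma sq_le (A B e : R) : 0 <= A -> 0 <= B -> 0 <= e ->
  A ^+ 2 <= B ^+ 2 + e ^+ 2 -> A <= B + e.
Proof. move=> hA hB he h; nra. Qed.

Lemma sq_le0 (A B : R) : 0 <= A -> 0 <= B -> A ^+ 2 <= B ^+ 2 -> A <= B.
Proof. move=> hA hB h; nra. Qed.

Lemma real_bound (t X r M : R) : 0 < t -> t <= 2^-1 -> 0 <= X -> 0 <= r ->
  r <= M -> (1 - t) ^+ 2 * X - r <= t -> X - r <= t * (8 * M + 9).
Proof.
move=> ht1 ht2 hX hr hM h.
have h4 : 4^-1 <= (1 - t) ^+ 2 by nra.
have hX4 : X <= 4 * (M + 1) by nra.
nra.
Qed.
End Reals.
Section Complete.
Variables (R : realType) (X : completeNormedModType R).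


Lemma complete_seq (x : nat -> X) (e : nat -> R) :
  (forall eps, 0 < eps -> exists N, e N < eps) ->
  (forall n m, (n <= m)%N -> `|x n - x m| <= e n) ->
  exists l, forall n, `|x n - l| <= e n.
Proof.
move=> He Hx.
have : cvg (x @ \oo).
  suff : cauchy (x @ \oo) by exact: cauchy_cvg.
  suff : cauchy_ex (x @ \oo) by exact: cauchy_exP.
  move=> eps eps0; rewrite /fmapE -ball_normE /ball_.
  have [N HN] := He eps eps0.
  exists (x N), N => // m /= Hm.
  exact: le_lt_trans (Hx _ _ Hm) HN.
move=> /cvg_ex [l Hl] /=; exists l => n.
apply: le_eps => eps eps0.
have := @cvgr_dist_le _ _ _ _ _ x l Hl eps eps0.
move=> [N _ HN].
have := HN (maxn n N) (leq_maxr n N).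
move=> H2.
have H1 := Hx n (maxn n N) (leq_maxl n N).
have := ler_normD (x n - x (maxn n N)) (x (maxn n N) - l).
rewrite addrA subrK => H3.
apply: (le_trans H3); apply: lerD => //.
by rewrite distrC.
Qed.
End Complete.
Section IP.
Variables (R : realType) (X : completeNormedModType R) (ip : X -> X -> R).
Hypothesis Hip : is_inner_product ip.

Lemma ipC x y : ip x y = ip y x.
Proof. by case: Hip. Qed.
Lemma ipL a x y z : ip (a *: x + y) z = a * ip x z + ip y z.
Proof. by case: Hip. Qed.
Lemma ipxx x : ip x x = `|x| ^+ 2.
Proof. by case: Hip. Qed.
Lemma ip0l z : ip 0 z = 0.
Proof.
have := ipL 1 0 0 z; rewrite scaler0 addr0 mul1r => H; lra.
Qed.
Lemma ipDl x y z : ip (x + y) z = ip x z + ip y z.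
Proof. by have := ipL 1 x y z; rewrite scale1r mul1r. Qed.
Lemma ipZl a x z : ip (a *: x) z = a * ip x z.
Proof. by rewrite -[a *: x]addr0 ipL ip0l addr0. Qed.
Lemma ipNl x z : ip (- x) z = - ip x z.
Proof. by rewrite -scaleN1r ipZl mulN1r. Qed.
Lemma ipBl x y z : ip (x - y) z = ip x z - ip y z.
Proof. by rewrite ipDl ipNl. Qed.
Lemma ipDr x y z : ip z (x + y) = ip z x + ip z y.
Proof. by rewrite ipC ipDl ipC [ip y z]ipC. Qed.
Lemma ipZr a x z : ip z (a *: x) = a * ip z x.
Proof. by rewrite ipC ipZl ipC. Qed.
Lemma ipBr x y z : ip z (x - y) = ip z x - ip z y.
Proof. by rewrite ipC ipBl ipC [ip y z]ipC. Qed.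
Lemma ip0r z : ip z 0 = 0.
Proof. by rewrite ipC ip0l. Qed.

Lemma nD2 x y : `|x + y| ^+ 2 = `|x| ^+ 2 + 2 * ip x y + `|y| ^+ 2.
Proof. rewrite -!ipxx ipDl !ipDr [ip y x]ipC; ring. Qed.
Lemma nB2 x y : `|x - y| ^+ 2 = `|x| ^+ 2 - 2 * ip x y + `|y| ^+ 2.
Proof. rewrite -!ipxx ipBl !ipBr [ip y x]ipC; ring. Qed.

Lemma ip_sumr k (F : 'I_k -> X) z :
  ip z (\sum_(i < k) F i) = \sum_(i < k) ip z (F i).
Proof.
apply: (big_morph (ip z)); [exact: (fun x y => ipDr x y z) | exact: ip0r].
Qed.

Lemma mid_id (q q' a : X) :
  `|(2^-1 : R) *: (q + q') - a| ^+ 2 =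
  2^-1 * `|q - a| ^+ 2 + 2^-1 * `|q' - a| ^+ 2 - 4^-1 * `|q - q'| ^+ 2.
Proof.
have -> : (2^-1 : R) *: (q + q') - a = (2^-1 : R) *: ((q - a) + (q' - a)).
  rewrite addrACA -opprD scalerBr; congr (_ - _).
  by rewrite -{2 3}[a]scale1r -scalerDl scalerA mulVf ?scale1r // pnatr_eq0.
have -> : q - q' = (q - a) - (q' - a) by rewrite opprB addrA subrK.
rewrite normrZ exprMn ger0_norm ?invr_ge0 ?ler0n //.
move: (q - a) (q' - a) => u v; rewrite nD2 nB2.
have -> : (4 : R)^-1 = 2^-1 ^+ 2 by rewrite exprVn; congr (_^-1); rewrite expr2; lra.
by field.
Qed.

End IP.
Section Fin.
Variables (R : realType) (X : completeNormedModType R) (ip : X -> X -> R).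
Hypothesis Hip : is_inner_product ip.
Variables (k : nat) (p : X) (y a : nat -> X).

Definition bary (w : nat -> X) (lam : nat -> R) := \sum_(i < k) lam i *: w i.

Lemma sum_dev (w : nat -> X) (lam : nat -> R) : \sum_(i < k) lam i = 1 ->
  \sum_(i < k) lam i *: (bary w lam - w i) = 0.
Proof.
move=> H1.
rewrite (eq_bigr (fun i : 'I_k => lam i *: bary w lam - lam i *: w i));
  last by move=> i _; rewrite scalerBr.
by rewrite sumrB -scaler_suml H1 scale1r subrr.
Qed.

Lemma var (w : nat -> X) (lam : nat -> R) c : \sum_(i < k) lam i = 1 ->
  \sum_(i < k) lam i * `|c - w i| ^+ 2 =
  `|c - bary w lam| ^+ 2 + \sum_(i < k) lam i * `|bary w lam - w i| ^+ 2.
Proof.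
move=> H1; set b := bary w lam.
transitivity (\sum_(i < k) (lam i * `|c - b| ^+ 2
   + 2 * ip (c - b) (lam i *: (b - w i)) + lam i * `|b - w i| ^+ 2)).
  apply: eq_bigr => i _.
  have -> : c - w (nat_of_ord i) = (c - b) + (b - w i) by rewrite addrA subrK.
  by rewrite (nD2 Hip) (ipZr Hip); ring.
rewrite !big_split /= -big_distrl /= H1 mul1r -big_distrr /= -(ip_sumr Hip).
by rewrite sum_dev // (ip0r Hip) mulr0 addr0.
Qed.

Definition simplex (lam : nat -> R) :=
  (forall i, (i < k)%N -> 0 <= lam i) /\ \sum_(i < k) lam i = 1.

Lemma dvar (w : nat -> X) (lam : nat -> R) : \sum_(i < k) lam i = 1 ->
  \sum_(j < k) lam j * \sum_(i < k) lam i * `|w j - w i| ^+ 2 =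
  2 * \sum_(i < k) lam i * `|bary w lam - w i| ^+ 2.
Proof.
move=> H1.
under eq_bigr => j _ do rewrite (@var w lam (w j) H1) mulrDr.
rewrite big_split /= -big_distrl /= H1 mul1r.
under eq_bigr => j _ do rewrite distrC.
ring.
Qed.

Lemma wdual (lam : nat -> R) : simplex lam ->
  (forall i j, (i < k)%N -> (j < k)%N -> `|a i - a j| <= `|y i - y j|) ->
  \sum_(i < k) lam i * `|bary a lam - a i| ^+ 2 <=
  \sum_(i < k) lam i * `|p - y i| ^+ 2.
Proof.
move=> [H0 H1] Hne.
rewrite (@var y lam p H1).
have H2 : 0 <= `|p - bary y lam| ^+ 2 by rewrite sqr_ge0.
suff : 2 * \sum_(i < k) lam i * `|bary a lam - a i| ^+ 2 <=
       2 * \sum_(i < k) lam i * `|bary y lam - y i| ^+ 2 by lra.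
rewrite -!dvar //.
apply: ler_sum => j _; apply: ler_wpM2l; first exact: H0.
apply: ler_sum => i _; apply: ler_wpM2l; first exact: H0.
rewrite ler_sqr ?nnegrE //; exact: Hne.
Qed.
Definition ff (i : nat) (q : X) := `|q - a i| ^+ 2 - `|p - y i| ^+ 2.
Definition LL (lam : nat -> R) q := \sum_(i < k) lam i * ff i q.
Definition hh (lam : nat -> R) := LL lam (bary a lam).
Definition lamt (lam : nat -> R) (t : R) (j : nat) := fun i : nat => (1 - t) * lam i + t * (i == j)%:R.

Lemma F1 (lam : nat -> R) (q : X) : \sum_(i < k) lam i = 1 -> LL lam q = `|q - bary a lam| ^+ 2 + hh lam.
Proof.
move=> H1; rewrite /hh /LL /ff.
under eq_bigr => i _ do rewrite mulrBr.
under [in RHS]eq_bigr => i _ do rewrite mulrBr.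
rewrite !sumrB (@var a lam q H1).
rewrite (@var a lam (bary a lam) H1) subrr normr0 expr0n /= add0r.
by rewrite addrA.
Qed.

Lemma F2 (lam : nat -> R) : simplex lam ->
  (forall i j, (i < k)%N -> (j < k)%N -> `|a i - a j| <= `|y i - y j|) ->
  hh lam <= 0.
Proof.
move=> Hs Hne; rewrite /hh /LL /ff.
under eq_bigr => i _ do rewrite mulrBr.
rewrite sumrB subr_le0; exact: wdual.
Qed.

Lemma sum_ind (G : nat -> R) j : (j < k)%N ->
  \sum_(i < k) (nat_of_ord i == j)%:R * G i = G j.
Proof.
move=> hj.
rewrite (eq_bigr (fun i : 'I_k => if (nat_of_ord i == j) then G i else 0)).
  by rewrite -big_mkcond /= big_ord1_eq hj.
by move=> i _; case: eqP => _; rewrite ?mul1r ?mul0r.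
Qed.

Lemma sum_indv (G : nat -> X) j : (j < k)%N ->
  \sum_(i < k) (nat_of_ord i == j)%:R *: G i = G j.
Proof.
move=> hj.
rewrite (eq_bigr (fun i : 'I_k => if (nat_of_ord i == j) then G i else 0)).
  by rewrite -big_mkcond /= big_ord1_eq hj.
by move=> i _; case: eqP => _; rewrite ?scale1r ?scale0r.
Qed.

Lemma LL_t (lam : nat -> R) (t : R) (j : nat) (q : X) : (j < k)%N ->
  LL (lamt lam t j) q = (1 - t) * LL lam q + t * ff j q.
Proof.
move=> hj; rewrite /LL /lamt.
under eq_bigr => i _ do rewrite mulrDl -!mulrA.
by rewrite big_split /= -!big_distrr /= (sum_ind (fun i => ff i q)).
Qed.

Lemma bary_t (lam : nat -> R) (t : R) (j : nat) : (j < k)%N ->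
  bary a (lamt lam t j) = (1 - t) *: bary a lam + t *: a j.
Proof.
move=> hj; rewrite /bary /lamt.
under eq_bigr => i _ do rewrite scalerDl -!scalerA.
by rewrite big_split /= -!scaler_sumr /= (sum_indv a).
Qed.

Lemma sum_t (lam : nat -> R) (t : R) (j : nat) : (j < k)%N -> \sum_(i < k) lam i = 1 ->
  \sum_(i < k) lamt lam t j i = 1.
Proof.
move=> hj H1; rewrite /lamt big_split /= -!big_distrr /= H1.
have E : \sum_(i < k) (nat_of_ord i == j)%:R = 1 :> R.
  by rewrite -[RHS](sum_ind (fun _ => 1) hj); apply: eq_bigr => i _; rewrite mulr1.
by rewrite E !mulr1 subrK.
Qed.

Lemma simplex_t (lam : nat -> R) (t : R) (j : nat) : (j < k)%N -> 0 <= t -> t <= 1 -> simplex lam ->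
  simplex (lamt lam t j).
Proof.
move=> hj h0 h1 [H0 H1]; split; last exact: sum_t.
move=> i hi; rewrite /lamt; apply: addr_ge0; apply: mulr_ge0 => //.
- by rewrite subr_ge0.
- exact: H0.
Qed.

Lemma F4 (lam : nat -> R) (t : R) (j : nat) : (j < k)%N -> 0 <= t -> t <= 1 -> simplex lam ->
  t * ff j (bary a (lamt lam t j)) <= hh (lamt lam t j) - (1 - t) * hh lam.
Proof.
move=> hj h0 h1 [H0 H1].
rewrite {1}/hh LL_t // (F1 _ H1).
have : 0 <= (1 - t) * `|bary a (lamt lam t j) - bary a lam| ^+ 2.
  by apply: mulr_ge0; rewrite ?subr_ge0 ?sqr_ge0.
lra.
Qed.

Lemma ff_t (lam : nat -> R) (t : R) (j : nat) : (j < k)%N ->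
  ff j (bary a (lamt lam t j)) = (1 - t) ^+ 2 * `|bary a lam - a j| ^+ 2 - `|p - y j| ^+ 2.
Proof.
move=> hj; rewrite /ff bary_t //.
have -> : (1 - t) *: bary a lam + t *: a j - a j = (1 - t) *: (bary a lam - a j).
  by rewrite scalerBr -addrA; congr (_ + _); rewrite scalerBl scale1r opprB.
by rewrite normrZ exprMn real_normK // num_real.
Qed.
Lemma approx : (0 < k)%N ->
  (forall i j, (i < k)%N -> (j < k)%N -> `|a i - a j| <= `|y i - y j|) ->
  forall eta : R, 0 < eta -> exists q, forall j, (j < k)%N -> ff j q <= eta.
Proof.
move=> hk Hne eta heta.
pose H := [set hh lam | lam in simplex].
pose lam0 := fun i : nat => (i == 0)%:R : R.
have E0 : \sum_(i < k) lam0 i = 1.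
  by rewrite -[RHS](sum_ind (fun _ => 1) hk); apply: eq_bigr => i _; rewrite mulr1.
have S0 : simplex lam0 by split => // n _; rewrite /lam0; case: (n == 0).
have hsup : has_sup H.
  split; first by exists (hh lam0), lam0.
  by exists 0 => _ [lam Hl <-]; exact: F2.
have hs0 : sup H <= 0.
  by apply: ge_sup; [exists (hh lam0), lam0 | move=> _ [lam Hl <-]; exact: F2].
pose M := \sum_(i < k) `|p - y i| ^+ 2.
have hM : forall j, (j < k)%N -> `|p - y j| ^+ 2 <= M.
  move=> j hj; rewrite -(sum_ind (fun i => `|p - y i| ^+ 2) hj).
  apply: ler_sum => i _; case: eqP => _; rewrite ?mul1r ?mul0r ?sqr_ge0 //.
have M0 : 0 <= M by apply: sumr_ge0 => m _; exact: sqr_ge0.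
pose t := Num.min 2^-1 (eta / (8 * M + 9)).
have hc : 0 < 8 * M + 9 by lra.
have ht0 : 0 < t by rewrite /t lt_min invr_gt0 ltr0n divr_gt0.
have ht1 : t <= 2^-1 by rewrite /t ge_min lexx.
have ht2 : t * (8 * M + 9) <= eta.
  have : t <= eta / (8 * M + 9) by rewrite /t ge_min lexx orbT.
  by rewrite ler_pdivlMr.
have ht3 : t <= 1 by lra.
have [_ [lam Hl <-] Hlam] := sup_adherent (mulr_gt0 ht0 ht0) hsup.
exists (bary a lam).
move=> j hj.
have h4 := F4 hj (ltW ht0) ht3 Hl.
have h5 : hh (lamt lam t j) <= sup H.
  apply: (ub_le_sup (proj2 hsup)).
  by exists (lamt lam t j) => //; apply: simplex_t => //; exact: ltW.
have h6 : t * ff j (bary a (lamt lam t j)) <= t * t.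
  have : (1 - t) * (sup H - t * t) <= (1 - t) * hh lam.
    by apply: ler_wpM2l; [rewrite subr_ge0 | lra].
  nra.
rewrite ler_pM2l // ff_t // in h6.
have := real_bound ht0 ht1 (sqr_ge0 _) (sqr_ge0 _) (hM j hj) h6.
rewrite /ff; lra.
Qed.
Lemma fin_exists : (0 < k)%N ->
  (forall i j, (i < k)%N -> (j < k)%N -> `|a i - a j| <= `|y i - y j|) ->
  exists q, forall j, (j < k)%N -> `|q - a j| <= `|p - y j|.
Proof.
move=> hk Hne.
pose T := [set d : R | exists q, forall j, (j < k)%N -> ff j q <= d].
have T1 : T 1 by apply: approx.
have lbT : lbound T (- `|p - y 0| ^+ 2).
  move=> d [q Hq]; apply: le_trans (Hq 0%N hk); rewrite /ff.
  have := sqr_ge0 `|q - a 0|; lra.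
have hinf : has_inf T by split; [exists 1 | exists (- `|p - y 0| ^+ 2)].
pose m := inf T.
have m0 : m <= 0.
  apply: le_eps => eps he; rewrite add0r.
  by apply: ge_inf; [exact: (proj2 hinf) | exact: approx].
pose ep := fun n : nat => (n.+1%:R^-1) ^+ 2 : R.
have ep0 : forall n, 0 < ep n by move=> n; rewrite /ep exprn_gt0 // invr_gt0 ltr0Sn.
have epm : forall n n', (n <= n')%N -> ep n' <= ep n.
  move=> n n' hn; rewrite /ep ler_sqr ?nnegrE ?invr_ge0 ?ler0n //.
  by rewrite lef_pV2 ?posrE ?ltr0Sn // ler_nat ltnS.
have : forall n, exists q, forall j, (j < k)%N -> ff j q <= m + ep n.
  move=> n; have [d [q Hq] Hd] := inf_adherent (ep0 n) hinf.
  by exists q => j hj; apply: (le_trans (Hq j hj)); exact: ltW.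
move/choice => [qs Hqs].
have Hc : forall n n', (n <= n')%N -> `|qs n - qs n'| <= 2 / n.+1%:R.
  move=> n n' hn.
  set q := qs n; set q' := qs n'.
  have : T (m + ep n - 4^-1 * `|q - q'| ^+ 2).
    exists ((2^-1 : R) *: (q + q')) => j hj.
    have h1 := Hqs n j hj; have h2 := Hqs n' j hj; have h3 := epm _ _ hn.
    move: h1 h2; rewrite /ff (mid_id Hip) -/q -/q'; lra.
  move/(ge_inf (proj2 hinf)); rewrite -/m => h.
  apply: sq_le0; rewrite ?divr_ge0 ?ler0n //.
  have -> : (2 / n.+1%:R) ^+ 2 = 4 * ep n.
    by rewrite /ep !expr2; field; exact: nS_neq0.
  move: h; move: (`|q - q'| ^+ 2) (ep n) => Z E; lra.
have He : forall eps : R, 0 < eps -> exists N, 2 / N.+1%:R < eps by move=> eps; exact: arch.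
have [l Hl] := complete_seq He Hc.
exists l => j hj.
apply: (@le_lim _ _ _ 3) => n.
have h1 : `|qs n - a j| <= `|p - y j| + n.+1%:R^-1.
  apply: sq_le; rewrite ?invr_ge0 ?ler0n //.
  have := Hqs n j hj; move: m0; rewrite /ff /ep.
  move: (n.+1%:R^-1 ^+ 2) (`|qs n - a j| ^+ 2) => E Z; lra.
have h2 := ler_normD (l - qs n) (qs n - a j); rewrite addrA subrK in h2.
apply: (le_trans h2).
rewrite distrC.
have E : 3 / n.+1%:R = 2 / n.+1%:R + n.+1%:R^-1 :> R.
  by rewrite -[3]/(2 + 1)%:R natrD mulrDl mul1r.
move: h1 (Hl n); rewrite E; move: (n.+1%:R^-1) (2 / n.+1%:R) => B A; lra.
Qed.
End Fin.
Section Inf.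
Variables (R : realType) (X : completeNormedModType R) (ip : X -> X -> R).
Hypothesis Hip : is_inner_product ip.

Lemma mid_eq (q q' z : X) :
  (2^-1 : R) *: (q + q') - z = (2^-1 : R) *: ((q - z) + (q' - z)).
Proof.
rewrite addrACA -opprD scalerBr; congr (_ - _).
by rewrite -{2 3}[z]scale1r -scalerDl scalerA mulVf ?scale1r // pnatr_eq0.
Qed.

Lemma ball_mid (q1 q2 z : X) (r : R) : `|q1 - z| <= r -> `|q2 - z| <= r ->
  `|(2^-1 : R) *: (q1 + q2) - z| <= r.
Proof.
move=> h1 h2; rewrite mid_eq normrZ ger0_norm ?invr_ge0 ?ler0n //.
have := ler_normD (q1 - z) (q2 - z).
have : 0 <= 2^-1 :> R by rewrite invr_ge0 ler0n.
move: (`|q1 - z + (q2 - z)|) => N h0 h3; nra.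
Qed.

Variables (S : X * X -> Prop) (p : X).
Hypothesis HS : forall e e', S e -> S e' -> `|e.2 - e'.2| <= `|e.1 - e'.1|.

Definition CC (F : seq (X * X)) q := forall e, e \in F -> `|q - e.2| <= `|p - e.1|.
Definition good (F : seq (X * X)) := forall e, e \in F -> S e.

Lemma fin_seq F : good F -> exists q, CC F q.
Proof.
move=> hF; case: F hF => [|e0 F] hF; first by exists 0 => e; rewrite in_nil.
pose l := e0 :: F.
pose y := fun i => (nth e0 l i).1.
pose a := fun i => (nth e0 l i).2.
have hk : (0 < size l)%N by [].
have Hne : forall i j, (i < size l)%N -> (j < size l)%N -> `|a i - a j| <= `|y i - y j|.
  by move=> i j hi hj; apply: HS; apply: hF; apply: mem_nth.
have [q Hq] := fin_exists Hip p hk Hne.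
exists q => e he.
have hi : (index e l < size l)%N by rewrite index_mem.
have := Hq _ hi; rewrite /a /y nth_index //.
Qed.

Lemma kirszbraun : exists q, forall e, S e -> `|q - e.2| <= `|p - e.1|.
Proof.
case: (pselect (exists e0, S e0)) => [[e0 Se0] | nS]; last first.
  by exists 0 => e Se; exfalso; apply: nS; exists e.
pose CS F := [set `|q| ^+ 2 | q in CC (e0 :: F)].
pose mu F := inf (CS F).
pose B := `|e0.2| + `|p - e0.1|.
have goodC : forall F, good F -> good (e0 :: F).
  by move=> F hF e; rewrite in_cons => /orP [/eqP -> | /hF].
have Bq : forall F q, CC (e0 :: F) q -> `|q| ^+ 2 <= B ^+ 2.
  move=> F q hq; have h := hq e0 (mem_head _ _).
  have h2 : `|q| <= B.
    have := ler_normD (q - e0.2) e0.2; rewrite subrK /B => h3.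
    apply: (le_trans h3); rewrite addrC; exact: lerD.
  by rewrite ler_sqr ?nnegrE // /B addr_ge0.
have lbCS : forall F, lbound (CS F) 0 by move=> F _ [q _ <-]; exact: sqr_ge0.
have hinf : forall F, good F -> has_inf (CS F).
  move=> F hF; split; last by exists 0.
  by have [q hq] := fin_seq (goodC _ hF); exists (`|q| ^+ 2), q.
have muB : forall F, good F -> mu F <= B ^+ 2.
  move=> F hF; have [q hq] := fin_seq (goodC _ hF).
  apply: le_trans (Bq _ _ hq); apply: ge_inf; [exact: (proj2 (hinf F hF)) | by exists q].
have muM : forall F F', good F' -> (forall e, e \in F -> e \in F') -> mu F <= mu F'.
  move=> F F' hF' sub; apply: lb_le_inf; first exact: (proj1 (hinf F' hF')).
  move=> _ [q hq <-]; apply: ge_inf; first by exists 0.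
  exists q => // e; rewrite in_cons => /orP [/eqP -> | he]; first by apply: hq; exact: mem_head.
  by apply: hq; rewrite in_cons (sub e he) orbT.
pose MS := [set mu F | F in good].
have hsup : has_sup MS.
  split; first by exists (mu [::]), [::] => // e; rewrite in_nil.
  by exists (B ^+ 2) => _ [F hF <-]; exact: muB.
pose M := sup MS.
have muleM : forall F, good F -> mu F <= M.
  by move=> F hF; apply: (ub_le_sup (proj2 hsup)); exists F.
pose ep := fun n : nat => (n.+1%:R^-1) ^+ 2 : R.
have ep0 : forall n, 0 < ep n by move=> n; rewrite /ep exprn_gt0 // invr_gt0 ltr0Sn.
have epm : forall n n', (n <= n')%N -> ep n' <= ep n.
  move=> n n' hn; rewrite /ep ler_sqr ?nnegrE ?invr_ge0 ?ler0n //.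
  by rewrite lef_pV2 ?posrE ?ltr0Sn // ler_nat ltnS.
have : forall n, exists F, good F /\ M - ep n < mu F.
  move=> n; have [_ [F hF <-] h] := sup_adherent (ep0 n) hsup.
  by exists F.
move/choice => [Fs HFs].
pose G := fix G n := if n is n'.+1 then G n' ++ Fs n else Fs 0.
have goodG : forall n, good (G n).
  elim => [|n IH] /=; first exact: (proj1 (HFs 0%N)).
  by move=> e; rewrite mem_cat => /orP [/IH | /(proj1 (HFs n.+1))].
have FsG : forall n e, e \in Fs n -> e \in G n.
  by case => [|n] e he //=; rewrite mem_cat he orbT.
have GG : forall n m e, (n <= m)%N -> e \in G n -> e \in G m.
  move=> n m e; elim: m => [|m IH]; first by rewrite leqn0 => /eqP ->.
  rewrite leq_eqVlt => /orP [/eqP -> // | /IH h he] /=.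
  by rewrite mem_cat h.
have muG : forall n, M - ep n < mu (G n).
  move=> n; apply: (lt_le_trans (proj2 (HFs n))); apply: muM; first exact: goodG.
  exact: FsG.
have near : forall F n, good F -> exists q, CC (e0 :: F) q /\ `|q| ^+ 2 < mu F + ep n.
  move=> F n hF; have [_ [q hq <-] h] := inf_adherent (ep0 n) (hinf F hF).
  by exists q.
have midb : forall F n q1 q2, good F -> M - ep n < mu F ->
    CC (e0 :: F) q1 -> CC (e0 :: F) q2 ->
    `|q1| ^+ 2 <= M + ep n -> `|q2| ^+ 2 <= M + ep n ->
    `|q1 - q2| <= 3 / n.+1%:R.
  move=> F n q1 q2 hF hmu h1 h2 n1 n2.
  have hmid : CC (e0 :: F) ((2^-1 : R) *: (q1 + q2)).
    by move=> e he; apply: ball_mid; [exact: h1 | exact: h2].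
  have : mu F <= `|(2^-1 : R) *: (q1 + q2) - 0| ^+ 2.
    by rewrite subr0; apply: ge_inf; [exact: (proj2 (hinf F hF)) | exists ((2^-1 : R) *: (q1 + q2))].
  rewrite (mid_id Hip) !subr0 => hm.
  apply: sq_le0; rewrite ?divr_ge0 ?ler0n //.
  have -> : (3 / n.+1%:R) ^+ 2 = 9 * ep n.
    by rewrite /ep !expr2; field; exact: nS_neq0.
  have : 0 < ep n := ep0 n.
  move: hm hmu n1 n2; move: (ep n) (mu F) (`|q1| ^+ 2) (`|q2| ^+ 2) (`|q1 - q2| ^+ 2) => E U A1 A2 D.
  lra.
have : forall n, exists q, CC (e0 :: G n) q /\ `|q| ^+ 2 < mu (G n) + ep n.
  by move=> n; apply: near; exact: goodG.
move/choice => [qs Hqs].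
have sub0 : forall n m q, (n <= m)%N -> CC (e0 :: G m) q -> CC (e0 :: G n) q.
  move=> n m q hnm hq e; rewrite in_cons => /orP [/eqP -> | he].
    by apply: hq; exact: mem_head.
  by apply: hq; rewrite in_cons (GG n m e hnm he) orbT.
have qsM : forall n, `|qs n| ^+ 2 <= M + ep n.
  move=> n; apply: ltW; apply: (lt_le_trans (proj2 (Hqs n))).
  by rewrite lerD2r; apply: muleM; exact: goodG.
have Hc : forall n m, (n <= m)%N -> `|qs n - qs m| <= 3 / n.+1%:R.
  move=> n m hnm.
  apply: (midb (G n) n (qs n) (qs m) (goodG n) (muG n) (proj1 (Hqs n))
     (sub0 n m _ hnm (proj1 (Hqs m))) (qsM n)).
  apply: (le_trans (qsM m)); rewrite lerD2l; exact: epm.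
have He : forall eps : R, 0 < eps -> exists N, 3 / N.+1%:R < eps by move=> eps; exact: arch.
have [l Hl] := complete_seq He Hc.
exists l => e Se.
apply: (@le_lim _ _ _ 6) => n.
have goodE : good (e :: G n).
  by move=> e'; rewrite in_cons => /orP [/eqP -> // | /(goodG n)].
have [q' [hq' nq']] := near (e :: G n) n goodE.
have hq'G : CC (e0 :: G n) q'.
  move=> e' ; rewrite in_cons => /orP [/eqP -> | he'].
    by apply: hq'; exact: mem_head.
  by apply: hq'; rewrite !in_cons he' !orbT.
have d1 : `|qs n - q'| <= 3 / n.+1%:R.
  apply: (midb (G n) n (qs n) q' (goodG n) (muG n) (proj1 (Hqs n)) hq'G (qsM n)).
  apply: ltW; apply: (lt_le_trans nq'); rewrite lerD2r; exact: muleM.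
have d2 : `|q' - e.2| <= `|p - e.1|.
  by apply: hq'; rewrite in_cons mem_head orbT.
have d0 := Hl n.
have t1 := ler_normD (l - qs n) (qs n - e.2).
have t2 := ler_normD (qs n - q') (q' - e.2).
rewrite addrA subrK in t1; rewrite addrA subrK in t2.
rewrite distrC in d0.
have E : 6 / n.+1%:R = 3 / n.+1%:R + 3 / n.+1%:R :> R.
  by rewrite -mulrDl -natrD.
rewrite E.
move: d0 d1 d2 t1 t2; move: (3 / n.+1%:R) => A; lra.
Qed.
End Inf.
Section Main.
Variables (R : realType) (X : completeNormedModType R) (ip : X -> X -> R).
Hypothesis Hip : is_inner_product ip.

Lemma diffZ (x u : X) (c : R) : (x + u) - (x - c *: u) = (1 + c) *: u.
Proof. by rewrite opprB addrCA [x + u]addrC addrK scalerDl scale1r addrC. Qed.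

Lemma Neq (rho : R) (x u : X) :
  (2 * (rho + 1)) *: x - (2 * rho + 1) *: (x + u) = x - (2 * rho + 1) *: u.
Proof.
rewrite scalerDr opprD addrA -scalerBl.
have -> : 2 * (rho + 1) - (2 * rho + 1) = 1 by ring.
by rewrite scale1r.
Qed.

Lemma key (rho : R) (x1 u1 x2 u2 : X) :
  `|(x1 + u1) - (x2 + u2)| ^+ 2
  - `|(x1 - (2 * rho + 1) *: u1) - (x2 - (2 * rho + 1) *: u2)| ^+ 2 =
  4 * (rho + 1) * (ip (x1 - x2) (u1 - u2) - rho * `|u1 - u2| ^+ 2).
Proof.
have -> : (x1 + u1) - (x2 + u2) = (x1 - x2) + (u1 - u2).
  by rewrite opprD addrACA.
have -> : (x1 - (2 * rho + 1) *: u1) - (x2 - (2 * rho + 1) *: u2)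
          = (x1 - x2) - (2 * rho + 1) *: (u1 - u2).
  by rewrite scalerBr opprB opprD opprK [RHS]addrACA [- x2 + _]addrC.
move: (x1 - x2) (u1 - u2) => dx du.
rewrite (nD2 Hip) (nB2 Hip) (ipZr Hip) normrZ exprMn real_normK ?num_real //.
ring.
Qed.

Lemma keyiff (rho : R) (x1 u1 x2 u2 : X) : -1 < rho ->
  rho * `|u1 - u2| ^+ 2 <= ip (x1 - x2) (u1 - u2) <->
  `|(x1 - (2 * rho + 1) *: u1) - (x2 - (2 * rho + 1) *: u2)|
     <= `|(x1 + u1) - (x2 + u2)|.
Proof.
move=> hrho; have := key rho x1 u1 x2 u2.
move: (ip (x1 - x2) (u1 - u2)) (`|u1 - u2| ^+ 2) => I U.
have hz := normr_ge0 ((x1 - (2 * rho + 1) *: u1) - (x2 - (2 * rho + 1) *: u2)).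
have hy := normr_ge0 ((x1 + u1) - (x2 + u2)).
move: hz hy.
move: (`|(x1 - (2 * rho + 1) *: u1) - (x2 - (2 * rho + 1) *: u2)|)
      (`|(x1 + u1) - (x2 + u2)|) => Z Y hz hy E.
rewrite -mulrA in E.
have hr : 0 < rho + 1 by lra.
split => h.
- apply: sq_le0 => //.
  have : 0 <= (rho + 1) * (I - rho * U) by apply: mulr_ge0; [exact: ltW | rewrite subr_ge0].
  move: E; move: ((rho + 1) * (I - rho * U)) (Y ^+ 2) (Z ^+ 2) => P A B; lra.
- have : Z ^+ 2 <= Y ^+ 2 by rewrite ler_sqr ?nnegrE.
  move=> h2; have h3 : 0 <= (rho + 1) * (I - rho * U).
    move: E h2; move: ((rho + 1) * (I - rho * U)) (Y ^+ 2) (Z ^+ 2) => P A B; lra.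
  by rewrite -subr_ge0; move: h3; rewrite pmulr_rge0.
Qed.

End Main.

Unset Implicit Arguments.

Theorem proposition3p12 (R : realType) (X : completeNormedModType R)
  (ip : X -> X -> R) (A : X -> set X) (rho : R) :
  is_inner_product ip ->
  dom_op A !=set0 ->
  -1 < rho ->
  (comonotone ip rho A <->
     nonexpansive_on (ran_IdA A) (reflected_op rho A)) /\
  (max_comonotone ip rho A <->
     (nonexpansive_on (ran_IdA A) (reflected_op rho A) /\
      ran_IdA A = setT)).
Proof.
move=> Hip _ hrho.
have hr : 0 < 2 * (rho + 1) by lra.
have NE : forall y z, reflected_op rho A y z <->
    exists x u, A x u /\ y = x + u /\ z = x - (2 * rho + 1) *: u.
  move=> y z; split.
  - move=> [x [[u [Au ->]] ->]]; exists x, u; split => //; split => //; exact: Neq.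
  - move=> [x [u [Au [-> ->]]]]; exists x; split; first by exists u.
    by rewrite Neq.
have part1 : comonotone ip rho A <->
    nonexpansive_on (ran_IdA A) (reflected_op rho A).
  split.
  - move=> HA.
    have Lip : forall x y zx zy, reflected_op rho A x zx -> reflected_op rho A y zy ->
        `|zx - zy| <= `|x - y|.
      move=> _ _ _ _ /NE [x1 [u1 [A1 [-> ->]]]] /NE [x2 [u2 [A2 [-> ->]]]].
      by apply/(keyiff Hip _ _ _ _ hrho); apply: HA.
    split => //.
    + move=> y; split.
      * move=> [x Hx]; exists ((2 * (rho + 1)) *: x - (2 * rho + 1) *: y).
        by exists x.
      * by move=> [z [x [Hx _]]]; exists x.
    + move=> y z1 z2 h1 h2; have := Lip _ _ _ _ h1 h2.
      by rewrite subrr normr0 normr_le0 subr_eq0 => /eqP.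
  - move=> [_ _ Lip] x u y v Au Av.
    apply/(keyiff Hip _ _ _ _ hrho); apply: Lip; apply/NE.
    + by exists x, u.
    + by exists y, v.
split => //.
split.
- move=> [HA Hmax]; have NX := proj1 part1 HA; split => //.
  apply/seteqP; split => // p _.
  have HS : forall e e' : X * X, reflected_op rho A e.1 e.2 -> reflected_op rho A e'.1 e'.2 ->
      `|e.2 - e'.2| <= `|e.1 - e'.1|.
    by case: NX => _ _ Lip e e' h h'; exact: Lip.
  have [q Hq] := kirszbraun Hip p HS.
  pose u := (2 * (rho + 1))^-1 *: (p - q).
  pose x := p - u.
  have hxu : x + u = p by rewrite subrK.
  have hz : x - (2 * rho + 1) *: u = q.
    rewrite /x -addrA -opprD -{1}[u]scale1r -scalerDl.
    have -> : 1 + (2 * rho + 1) = 2 * (rho + 1) by ring.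
    rewrite /u scalerA mulfV ?scale1r; last exact: lt0r_neq0.
    by rewrite opprB addrC subrK.
  pose B := fun x' u' => A x' u' \/ (x' = x /\ u' = u).
  have HB : comonotone ip rho B.
    move=> x1 u1 x2 u2 [A1 | [-> ->]] [A2 | [-> ->]].
    + exact: HA.
    + apply/(keyiff Hip _ _ _ _ hrho); rewrite hxu hz distrC [X in _ <= X]distrC.
      apply: (Hq (x1 + u1, x1 - (2 * rho + 1) *: u1)); apply/NE; by exists x1, u1.
    + apply/(keyiff Hip _ _ _ _ hrho); rewrite hxu hz.
      apply: (Hq (x2 + u2, x2 - (2 * rho + 1) *: u2)); apply/NE; by exists x2, u2.
    + by rewrite !subrr normr0 expr0n /= mulr0 (ip0l Hip).
  have Axu : A x u by apply: (Hmax B HB) => //; [move=> x' u' h; left | right].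
  by exists x, u; split => //; rewrite hxu.
- move=> [NX HD]; split; first exact/part1.
  move=> Bop HB sub x u Bxu.
  have : ran_IdA A (x + u) by rewrite HD.
  move=> [x' [u' [Au' E]]].
  have Bxu' := sub _ _ Au'.
  have := HB x u x' u' Bxu Bxu'.
  move/(keyiff Hip _ _ _ _ hrho); rewrite E subrr normr0 normr_le0 subr_eq0 => /eqP Ez.
  have Eu : u = u'.
    have h1 := diffZ x u (2 * rho + 1); have h2 := diffZ x' u' (2 * rho + 1).
    rewrite E Ez in h1.
    apply: (scalerI (a := 1 + (2 * rho + 1))).
      by apply: lt0r_neq0; lra.
    by rewrite /= -h1 h2.
  have Ex : x = x' by move: E; rewrite Eu => /addIr.
  by rewrite Ex Eu.
Qed.
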